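(* Let $\varphi,\psi:\mathbb{C}\rightarrow\mathbb{C}^n$ be given by $\varphi(\theta)=Y\exp_{N}(\theta S)c+((1,\theta,\cdots,\theta^{N})\otimes I_n)x$ and $\psi(\theta)=Y\exp_{N}(\theta S)d+((1,\theta,\cdots,\theta^{N})\otimes I_n)z$. Then, for any $N_{\max}\ge N+1$, \[ \langle\varphi,\psi\rangle=\sum_{i=0}^Nz_i^Hx_i+d^HW_{N+1,N_{\max}}c+\varepsilon_{N_{\max}}, \qquad W_{N,M}=\sum_{i=N}^{M}\frac{(S^i)^HY^HY S^i}{(i!)^2}, \] where the error satisfies \[ |\varepsilon_{N_{\max}}|\le\|d\|_2\|Y^HY\|_2\|c\|_2\frac{e^{2\|S\|_2}\|S\|_2^{2(N_{\max}+1)}}{((N_{\max}+1)!)^2}. \]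
   Context: Let $Y\in\mathbb{C}^{n\times p}$, $S\in\mathbb{C}^{p\times p}$, $c,d\in\mathbb{C}^p$, and $x=(x_0^T,\ldots,x_N^T)^T$, $z=(z_0^T,\ldots,z_N^T)^T\in\mathbb{C}^{(N+1)n}$ with blocks $x_i,z_i\in\mathbb{C}^n$. Here $\exp_N(\theta S):=\sum_{i=N+1}^\infty \frac{1}{i!}\theta^iS^i$ denotes the remainder of the truncated Taylor expansion of the matrix exponential (with $\exp_{-1}=\exp$). The scalar product of two such functions is defined as the Euclidean scalar product of their monomial Taylor coefficients, i.e. for $\varphi(\theta)=\sum_j\theta^jx_j$, $\psi(\theta)=\sum_j\theta^jz_j$, $\langle\varphi,\psi\rangle:=\sum_{i=0}^\infty z_i^Hx_i$; for the structured functions above this reads \[ \langle\varphi,\psi\rangle=\sum_{i=0}^Nz_i^Hx_i+\sum_{i=N+1}^{\infty}\frac{d^H(S^i)^HY^HY S^ic}{(i!)^2}. \] *)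

(* Defs.v *)
From HB Require Import structures.
From mathcomp Require Import all_boot all_order all_algebra.
From mathcomp Require Import all_classical all_reals all_analysis.
From mathcomp Require Import complex.
Set Implicit Arguments. Unset Strict Implicit. Unset Printing Implicit Defensive.
Import Order.TTheory GRing.Theory Num.Theory.
Import numFieldNormedType.Exports.
Local Open Scope ring_scope.
Local Open Scope complex_scope.

(* standard (norm-induced) topology on the complex numbers R[i] *)
HB.instance Definition _ (R : rcfType) := PseudoPointedMetric.copy R[i] (R[i])^o.

Definition ctr (R : rcfType) m n (A : 'M[R[i]]_(m, n)) : 'M[R[i]]_(n, m) :=
  (map_mx (fun z : R[i] => z^*) A)^T.

Definition cmod (R : rcfType) (z : R[i]) : R :=
  Num.sqrt (complex.Re z ^+ 2 + complex.Im z ^+ 2).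

Definition vnorm2 (R : rcfType) n (v : 'cV[R[i]]_n) : R :=
  Num.sqrt (\sum_(k < n) cmod (v k 0) ^+ 2).

Definition mnorm2 (R : realType) m n (A : 'M[R[i]]_(m, n)) : R :=
  sup [set vnorm2 (A *m v) | v in [set v : 'cV[R[i]]_n | vnorm2 v = 1]]%classic.

Definition sc (R : rcfType) (A : 'M[R[i]]_1) : R[i] := A 0 0.

(* Monomial Taylor coefficients of
   theta |-> Y exp_N(theta S) c + ((1,theta,...,theta^N) (x) I_n) x,
   where x_i are the blocks of x: coefficient j is x_j for j <= N and
   Y S^j c / j! for j > N. *)
Definition taylor_coef (R : rcfType) n p N (Y : 'M[R[i]]_(n, p)) (S : 'M[R[i]]_p)
  (c : 'cV[R[i]]_p) (x : 'I_N.+1 -> 'cV[R[i]]_n) (j : nat) : 'cV[R[i]]_n :=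
  match (insub j : option 'I_N.+1) with
  | Some k => x k
  | None => (j`!%:R)^-1 *: (Y *m (S ^+ j) *m c)
  end.

(* Scalar product of two functions given by their monomial Taylor
   coefficient sequences: sum_{i>=0} z_i^H x_i. *)
Definition fun_inner (R : realType) n (a b : nat -> 'cV[R[i]]_n) : R[i] :=
  limn (fun M : nat => \sum_(0 <= i < M) sc (ctr (b i) *m a i)).

Definition Wmat (R : rcfType) n p (Y : 'M[R[i]]_(n, p)) (S : 'M[R[i]]_p) (N M : nat)
  : 'M[R[i]]_p :=
  \sum_(N <= i < M.+1) ((i`!%:R) ^+ 2)^-1 *: (ctr (S ^+ i) *m ctr Y *m Y *m S ^+ i).

(* Main.v *)
Require Import Defs.
From HB Require Import structures.
From mathcomp Require Import all_boot all_order all_algebra.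
From mathcomp Require Import all_classical all_reals all_analysis.
From mathcomp Require Import complex.
Import Order.TTheory GRing.Theory Num.Theory.
Import numFieldNormedType.Exports.
Local Open Scope ring_scope.
From mathcomp Require Import ring lra.


Module M1.
Import Order.TTheory GRing.Theory Num.Theory.
Import numFieldNormedType.Exports.
Set Implicit Arguments. Unset Strict Implicit.
Local Open Scope ring_scope.

Section Cmod.
Variable R : rcfType.
Implicit Types (u v w : R[i]).

Lemma cmodC u : (cmod u)%:C%C = `|u|.
Proof. by rewrite normc_def. Qed.

Lemma cmod_ge0 u : 0 <= cmod u.
Proof. by rewrite /cmod sqrtr_ge0. Qed.

Lemma cmod_le u v : (cmod u <= cmod v) = (`|u| <= `|v|).
Proof. by rewrite -!cmodC lecR. Qed.

Lemma cmodM u v : cmod (u * v) = cmod u * cmod v.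
Proof. apply: (@complexI R); by rewrite rmorphM /= !cmodC normrM. Qed.

Lemma cmodD u v : cmod (u + v) <= cmod u + cmod v.
Proof. by rewrite -lecR rmorphD /= !cmodC ler_normD. Qed.

Lemma cmodJ u : cmod (u^*)%C = cmod u.
Proof. apply: (@complexI R); by rewrite !cmodC normcJ. Qed.


Lemma cmod_sum (I : finType) (f : I -> R[i]) :
  cmod (\sum_i f i) <= \sum_i cmod (f i).
Proof.
rewrite -lecR cmodC rmorph_sum /=.
under [X in _ <= X]eq_bigr do rewrite cmodC.
exact: ler_norm_sum.
Qed.

Lemma cmod0 : cmod (0 : R[i]) = 0.
Proof. apply: (@complexI R); by rewrite cmodC normr0. Qed.

Lemma cmod_eq0 u : (cmod u == 0) = (u == 0).
Proof. by rewrite -(inj_eq (@complexI R)) cmodC normr_eq0. Qed.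
End Cmod.

End M1.
Import M1.


Module M2.
Import Order.TTheory GRing.Theory Num.Theory.
Import numFieldNormedType.Exports.
Set Implicit Arguments. Unset Strict Implicit.
Local Open Scope ring_scope.

Section CS.
Variable R : rcfType.

Lemma real_CS m (a b : 'I_m -> R) :
  (\sum_i a i * b i) ^+ 2 <= (\sum_i a i ^+ 2) * (\sum_i b i ^+ 2).
Proof.
have H : 0 <= \sum_i \sum_j (a i * b j - a j * b i) ^+ 2.
  by apply: sumr_ge0 => i _; apply: sumr_ge0 => j _; apply: sqr_ge0.
have E : \sum_i \sum_j (a i * b j - a j * b i) ^+ 2 =
   2 * ((\sum_i a i ^+ 2) * (\sum_i b i ^+ 2) - (\sum_i a i * b i) ^+ 2).
  have E1 : (\sum_i a i ^+ 2) * (\sum_i b i ^+ 2) =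
        \sum_i \sum_j (a i ^+ 2 * b j ^+ 2).
    by rewrite mulr_suml; apply: eq_bigr => i _; rewrite mulr_sumr.
  have E2 : (\sum_i a i * b i) ^+ 2 =
        \sum_i \sum_j ((a i * b i) * (a j * b j)).
    by rewrite expr2 mulr_suml; apply: eq_bigr => i _; rewrite mulr_sumr.
  have E3 : \sum_i \sum_j (a j ^+ 2 * b i ^+ 2) = \sum_i \sum_j (a i ^+ 2 * b j ^+ 2).
    by rewrite exchange_big.
  rewrite E1 E2.
  transitivity (\sum_i \sum_j (a i ^+ 2 * b j ^+ 2) + \sum_i \sum_j (a j ^+ 2 * b i ^+ 2)
     - 2 * \sum_i \sum_j ((a i * b i) * (a j * b j))).
    rewrite -big_split /= mulr_sumr -sumrB; apply: eq_bigr => i _.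
    rewrite -big_split /= mulr_sumr -sumrB; apply: eq_bigr => j _.
    ring.
  rewrite E3; ring.
lra.
Qed.

Lemma sqrt_sum_le m (a b : 'I_m -> R) : (forall i, 0 <= a i) -> (forall i, 0 <= b i) ->
  \sum_i a i * b i <= Num.sqrt (\sum_i a i ^+ 2) * Num.sqrt (\sum_i b i ^+ 2).
Proof.
move=> a0 b0.
have s0 : 0 <= \sum_i a i * b i by apply: sumr_ge0 => i _; apply: mulr_ge0.
have A0 : 0 <= \sum_i a i ^+ 2 by apply: sumr_ge0 => i _; apply: sqr_ge0.
rewrite -sqrtrM // -(ger0_norm s0) -sqrtr_sqr ler_wsqrtr //.
exact: real_CS.
Qed.
End CS.

Section Vec.
Variable R : rcfType.

Lemma vnorm2_ge0 n (v : 'cV[R[i]]_n) : 0 <= vnorm2 v.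
Proof. exact: sqrtr_ge0. Qed.

Lemma sc_ctr n (u v : 'cV[R[i]]_n) : sc (ctr u *m v) = \sum_k (u k 0)^*%C * v k 0.
Proof. by rewrite /sc !mxE; apply: eq_bigr => k _; rewrite !mxE. Qed.

Lemma CS_vec n (u v : 'cV[R[i]]_n) : cmod (sc (ctr u *m v)) <= vnorm2 u * vnorm2 v.
Proof.
rewrite sc_ctr; apply: le_trans; first exact: cmod_sum.
under eq_bigr do rewrite cmodM cmodJ.
apply: sqrt_sum_le => i; exact: cmod_ge0.
Qed.

Lemma entry_le n (v : 'cV[R[i]]_n) k : cmod (v k 0) <= vnorm2 v.
Proof.
rewrite -(ger0_norm (cmod_ge0 (v k 0))) -sqrtr_sqr ler_wsqrtr //.
rewrite (bigD1 k) //= lerDl; apply: sumr_ge0 => i _; exact: sqr_ge0.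
Qed.

Lemma vnorm2_scale n (a : R[i]) (v : 'cV[R[i]]_n) : vnorm2 (a *: v) = cmod a * vnorm2 v.
Proof.
rewrite /vnorm2.
under eq_bigr do rewrite mxE cmodM exprMn.
rewrite -mulr_sumr sqrtrM ?sqr_ge0 // sqrtr_sqr ger0_norm //; exact: cmod_ge0.
Qed.

Lemma vnorm2_eq0 n (v : 'cV[R[i]]_n) : vnorm2 v = 0 -> v = 0.
Proof.
move=> /eqP; rewrite sqrtr_eq0 => H.
have H0 : \sum_k cmod (v k 0) ^+ 2 = 0.
  by apply/eqP; rewrite eq_le H /=; apply: sumr_ge0 => i _; exact: sqr_ge0.
apply/matrixP => i j; rewrite (ord1 j) mxE.
have /psumr_eq0P := H0 => /(_ (fun i _ => sqr_ge0 _) i isT) /eqP.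
by rewrite sqrf_eq0 cmod_eq0 => /eqP.
Qed.

Definition Kb {m n} (A : 'M[R[i]]_(m, n)) : R :=
  Num.sqrt (\sum_k (\sum_j cmod (A k j)) ^+ 2).

Lemma mulmx_crude m n (A : 'M[R[i]]_(m, n)) (w : 'cV[R[i]]_n) :
  vnorm2 (A *m w) <= Kb A * vnorm2 w.
Proof.
rewrite /vnorm2 /Kb -sqrtrM; last by apply: sumr_ge0 => i _; exact: sqr_ge0.
apply: ler_wsqrtr; rewrite mulr_suml; apply: ler_sum => k _.
have W0 : 0 <= \sum_k cmod (w k 0) ^+ 2 by apply: sumr_ge0 => i _; exact: sqr_ge0.
rewrite -(sqr_sqrtr W0) -exprMn; apply: lerXn2r; rewrite ?nnegrE ?cmod_ge0 //.
  by apply: mulr_ge0; [apply: sumr_ge0 => i _; exact: cmod_ge0|exact: sqrtr_ge0].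
rewrite mxE; apply: le_trans; first exact: cmod_sum.
rewrite mulr_suml; apply: ler_sum => j _; rewrite cmodM ler_wpM2l ?cmod_ge0 //.
exact: entry_le.
Qed.
End Vec.

End M2.
Import M2.


Module M3.
Import Order.TTheory GRing.Theory Num.Theory.
Import numFieldNormedType.Exports.
Set Implicit Arguments. Unset Strict Implicit.
Local Open Scope ring_scope.
Local Open Scope classical_set_scope.

Lemma cmod_real (R : rcfType) (r : R) : cmod (r%:C)%C = `|r|.
Proof. by rewrite /cmod /= expr0n /= addr0 sqrtr_sqr. Qed.

Lemma vnorm2_0 (R : rcfType) n : vnorm2 (0 : 'cV[R[i]]_n) = 0.
Proof.
rewrite /vnorm2 big1 ?sqrtr0 // => k _; by rewrite mxE cmod0 expr0n.
Qed.

Section Mn.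
Variable R : realType.

Lemma mnorm2_bound m n (A : 'M[R[i]]_(m, n)) v : vnorm2 (A *m v) <= mnorm2 A * vnorm2 v.
Proof.
set E := [set vnorm2 (A *m v) | v in [set v : 'cV[R[i]]_n | vnorm2 v = 1]].
have ubE : has_ubound E.
  exists (Kb A) => _ [w /= w1 <-].
  by apply: le_trans (mulmx_crude A w) _; rewrite w1 mulr1.
have [v0|vn0] := eqVneq (vnorm2 v) 0.
  by rewrite v0 (vnorm2_eq0 v0) mulmx0 vnorm2_0 mulr0.
have vpos : 0 < vnorm2 v by rewrite lt_neqAle eq_sym vn0 vnorm2_ge0.
set a : R[i] := ((vnorm2 v)^-1)%:C%C.
have ca : cmod a = (vnorm2 v)^-1 by rewrite cmod_real ger0_norm // invr_ge0 vnorm2_ge0.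
have w1 : vnorm2 (a *: v) = 1 by rewrite vnorm2_scale ca mulVf.
have : E (vnorm2 (A *m (a *: v))) by exists (a *: v).
move=> /(ub_le_sup ubE); rewrite -scalemxAr vnorm2_scale ca.
move=> H; rewrite mulrC; apply: le_trans _ (ler_wpM2l (vnorm2_ge0 v) H).
by rewrite mulrA mulfV // mul1r.
Qed.

Lemma mnorm2_ge0 m n (A : 'M[R[i]]_(m, n)) : 0 <= mnorm2 A.
Proof.
rewrite /mnorm2.
set E := [set vnorm2 (A *m v) | v in [set v : 'cV[R[i]]_n | vnorm2 v = 1]].
have ubE : has_ubound E.
  exists (Kb A) => _ [w /= w1 <-].
  by apply: le_trans (mulmx_crude A w) _; rewrite w1 mulr1.
have [->|/set0P [e Ee]] := eqVneq E set0; first by rewrite sup0.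
apply: le_trans (ub_le_sup ubE Ee).
by case: Ee => w _ <-; exact: vnorm2_ge0.
Qed.

Lemma mnorm2_pow p (S : 'M[R[i]]_p) (v : 'cV[R[i]]_p) i :
  vnorm2 (S ^+ i *m v) <= mnorm2 S ^+ i * vnorm2 v.
Proof.
elim: i => [|i IH]; first by rewrite !expr0 mul1mx mul1r.
rewrite exprS -mulmxE -mulmxA; apply: le_trans (mnorm2_bound _ _) _.
by rewrite exprS -mulrA ler_wpM2l // mnorm2_ge0.
Qed.
End Mn.

End M3.
Import M3.


Module M4.
Import Order.TTheory GRing.Theory Num.Theory.
Import numFieldNormedType.Exports.
Set Implicit Arguments. Unset Strict Implicit.
Local Open Scope ring_scope.

Section Alg.
Variable R : rcfType.

Lemma ctrZ m n (a : R[i]) (A : 'M[R[i]]_(m, n)) : ctr (a *: A) = conjc a *: ctr A.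
Proof. by apply/matrixP => i j; rewrite !mxE rmorphM. Qed.

Lemma ctr_mul m n k (A : 'M[R[i]]_(m, n)) (B : 'M[R[i]]_(n, k)) :
  ctr (A *m B) = ctr B *m ctr A.
Proof.
apply/matrixP => i j; rewrite !mxE rmorph_sum; apply: eq_bigr => l _.
by rewrite !mxE rmorphM mulrC.
Qed.

Lemma scZ (a : R[i]) (A : 'M[R[i]]_1) : sc (a *: A) = a * sc A.
Proof. by rewrite /sc mxE. Qed.

Lemma sc_sum I (r : seq I) (P : pred I) (F : I -> 'M[R[i]]_1) :
  sc (\sum_(j <- r | P j) F j) = \sum_(j <- r | P j) sc (F j).
Proof. by rewrite /sc summxE. Qed.

Lemma conj_invfact j : conjc ((j`!%:R : R[i])^-1) = (j`!%:R)^-1.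
Proof. by rewrite conjc_inv conjc_nat. Qed.

Lemma invfact_real j : ((j`!%:R ^+ 2)^-1 : R[i]) = (((j`!%:R ^+ 2)^-1 : R))%:C%C.
Proof. by rewrite fmorphV rmorphXn rmorph_nat. Qed.

Lemma cmod_invfact j : cmod ((j`!%:R ^+ 2)^-1 : R[i]) = (j`!%:R ^+ 2)^-1.
Proof. by rewrite invfact_real cmod_real ger0_norm // invr_ge0 sqr_ge0. Qed.

Variables (n p : nat) (Y : 'M[R[i]]_(n, p)) (S : 'M[R[i]]_p) (c d : 'cV[R[i]]_p).

Definition Tt j := sc (ctr d *m (((j`!%:R ^+ 2)^-1 : R[i]) *:
           (ctr (S ^+ j) *m ctr Y *m Y *m S ^+ j)) *m c).

Lemma Tt_alt j : Tt j = (j`!%:R ^+ 2)^-1 *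
   sc (ctr (S ^+ j *m d) *m (ctr Y *m Y) *m (S ^+ j *m c)).
Proof.
rewrite /Tt -scalemxAr -scalemxAl scZ; congr (_ * sc _).
by rewrite ctr_mul !mulmxA.
Qed.

Lemma Tt_coef j : sc (ctr ((j`!%:R)^-1 *: (Y *m (S ^+ j) *m d)) *m
                      ((j`!%:R)^-1 *: (Y *m (S ^+ j) *m c))) = Tt j.
Proof.
rewrite Tt_alt ctrZ conj_invfact -scalemxAl -scalemxAr !scZ mulrA -exprVn expr2.
congr (_ * sc _); by rewrite !ctr_mul !mulmxA.
Qed.

Lemma Wmat_sc N M : sc (ctr d *m Wmat Y S N M *m c) = \sum_(N <= j < M.+1) Tt j.
Proof. by rewrite /Wmat mulmx_sumr mulmx_suml sc_sum. Qed.
End Alg.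

End M4.
Import M4.


Module M5.
Import Order.TTheory GRing.Theory Num.Theory.
Import numFieldNormedType.Exports.
Set Implicit Arguments. Unset Strict Implicit.
Local Open Scope ring_scope.
Local Open Scope classical_set_scope.

Section Ser.
Variable R : realType.
Variable s : R.
Hypothesis s0 : 0 <= s.

Let g j := s ^+ j / j`!%:R.

Let g0 j : 0 <= g j.
Proof. by rewrite /g divr_ge0 // exprn_ge0. Qed.

Lemma fact_mul_le i K : (i`! * K`! <= (i + K)`!)%N.
Proof.
have := @bin_fact (i + K) K (leq_addl _ _).
rewrite addnK => <-.
rewrite mulnC; apply: leq_pmull; by rewrite bin_gt0 leq_addl.
Qed.

Lemma g_shift i K : g (i + K) <= g i * g K.
Proof.
rewrite /g exprD mulrACA; apply: ler_wpM2l; first by rewrite mulr_ge0 ?exprn_ge0.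
rewrite -invfM lef_pV2 ?posrE ?mulr_gt0 ?ltr0n ?fact_gt0 //.
by rewrite -natrM ler_nat fact_mul_le.
Qed.

Lemma expR_series : expR s = limn (series (exp_coeff s)).
Proof. by rewrite expRE /pseries -exp_coeffE. Qed.

Lemma series_le_expR L : series (exp_coeff s) L <= expR s.
Proof.
rewrite expR_series; apply: nondecreasing_cvgn_le; last exact: is_cvg_series_exp_coeff.
by apply: nondecreasing_series => k _ _; exact: exp_coeff_ge0.
Qed.

Lemma g_le i : g i <= expR s.
Proof.
apply: le_trans (series_le_expR i.+1).
rewrite /series /= big_nat_recr //= lerDr; apply: sumr_ge0 => k _; exact: exp_coeff_ge0.
Qed.

Lemma sum_g2 L : \sum_(0 <= i < L) g i ^+ 2 <= expR s ^+ 2.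
Proof.
have H : \sum_(0 <= i < L) g i ^+ 2 <= \sum_(0 <= i < L) g i * expR s.
  by apply: ler_sum => i _; rewrite expr2 ler_wpM2l // g_le.
apply: le_trans H _.
rewrite -mulr_suml expr2 ler_wpM2r ?expR_ge0 //.
exact: (series_le_expR L).
Qed.

Lemma tail_bound K J :
  \sum_(K <= j < J) s ^+ (2 * j) / (j`!%:R ^+ 2) <=
  expR (2 * s) * (s ^+ (2 * K) / (K`!%:R ^+ 2)).
Proof.
have E j : s ^+ (2 * j) / (j`!%:R ^+ 2) = g j ^+ 2.
  by rewrite /g expr_div_n -exprM mulnC.
under eq_bigr do rewrite E.
rewrite E -(add0n K) big_addn.
have H : \sum_(0 <= i < J - K) g (i + K) ^+ 2 <= \sum_(0 <= i < J - K) g K ^+ 2 * g i ^+ 2.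
  apply: ler_sum => i _; rewrite -exprMn; apply: lerXn2r.
  - by rewrite nnegrE.
  - by rewrite nnegrE mulr_ge0.
  by rewrite mulrC g_shift.
apply: le_trans H _.
rewrite -mulr_sumr mulrC add0n ler_wpM2r ?sqr_ge0 //.
by rewrite mulr_natl mulr2n expRD -expr2 sum_g2.
Qed.
End Ser.

End M5.
Import M5.


Module M6.
Import Order.TTheory GRing.Theory Num.Theory.
Import numFieldNormedType.Exports.
Set Implicit Arguments. Unset Strict Implicit.
Local Open Scope ring_scope.
Local Open Scope classical_set_scope.

Section Cvg.
Variable R : realType.

Lemma re_le (u : R[i]) : `|complex.Re u| <= cmod u.
Proof. by rewrite /cmod -sqrtr_sqr ler_wsqrtr // lerDl sqr_ge0. Qed.

Lemma im_le (u : R[i]) : `|complex.Im u| <= cmod u.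
Proof. by rewrite /cmod -sqrtr_sqr ler_wsqrtr // lerDr sqr_ge0. Qed.

Lemma cmod_sum_nat (F : nat -> R[i]) M :
  cmod (\sum_(0 <= k < M) F k) <= \sum_(0 <= k < M) cmod (F k).
Proof.
rewrite -lecR cmodC rmorph_sum /=.
under [X in _ <= X]eq_bigr do rewrite cmodC.
exact: ler_norm_sum.
Qed.

Lemma sqrt_le_abs (x y : R) : Num.sqrt (x ^+ 2 + y ^+ 2) <= `|x| + `|y|.
Proof.
have h0 : 0 <= `|x| + `|y| by rewrite addr_ge0.
rewrite -(ger0_norm h0) -sqrtr_sqr ler_wsqrtr //.
rewrite -(real_normK (num_real x)) -(real_normK (num_real y)).
have := normr_ge0 x; have := normr_ge0 y; nra.
Qed.

Lemma real_series_cvg (u : nat -> R) (Bd : R) :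
  (forall M, \sum_(0 <= k < M) `|u k| <= Bd) -> cvgn (series u).
Proof.
move=> hB; apply: normed_cvg; apply: nondecreasing_is_cvgn.
  by apply: nondecreasing_series => k _ _; exact: normr_ge0.
by exists Bd => _ [M _ <-]; exact: hB.
Qed.

Lemma cvg_complex_series (F : nat -> R[i]) (Bd : R) :
  (forall M, \sum_(0 <= k < M) cmod (F k) <= Bd) ->
  exists L : R[i], series F @ \oo --> L /\ cmod L <= Bd.
Proof.
move=> hB.
pose ReF k := complex.Re (F k). pose ImF k := complex.Im (F k).
have cRe : cvgn (series ReF).
  apply: (real_series_cvg (Bd := Bd)) => M; apply: le_trans (hB M).
  by apply: ler_sum => k _; exact: re_le.
have cIm : cvgn (series ImF).
  apply: (real_series_cvg (Bd := Bd)) => M; apply: le_trans (hB M).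
  by apply: ler_sum => k _; exact: im_le.
set a := limn (series ReF). set b := limn (series ImF).
have ReS M : complex.Re (series F M) = series ReF M by rewrite /series /= raddf_sum.
have ImS M : complex.Im (series F M) = series ImF M by rewrite /series /= raddf_sum.
exists (a +i* b)%C; split.
  suff H : (series F : nat -> (R[i])^o) @ \oo --> ((a +i* b)%C : (R[i])^o) by [].
  apply/cvgrPdist_lt => -[e1 e2]; rewrite ltcE /= => /andP[/eqP e20 e1pos].
  have e2pos : 0 < e1 / 2 by rewrite divr_gt0.
  have hA := cRe; move/cvgr_dist_lt: hA => /(_ _ e2pos) hA.
  have hB' := cIm; move/cvgr_dist_lt: hB' => /(_ _ e2pos) hB'.
  near=> M.
  rewrite e20 -cmodC ltcR.
  apply: le_lt_trans; first exact: sqrt_le_abs.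
  rewrite !raddfB /= ReS ImS.
  have h1 : `|a - series ReF M| < e1 / 2 by near: M.
  have h2 : `|b - series ImF M| < e1 / 2 by near: M.
  lra.
rewrite /cmod /=.
have B0 : 0 <= Bd by apply: le_trans (hB 0); rewrite big_geq.
rewrite -(ger0_norm B0) -sqrtr_sqr ler_wsqrtr //.
pose h M := series ReF M * series ReF M + series ImF M * series ImF M.
have hc : h @ \oo --> a * a + b * b by apply: cvgD; apply: cvgM.
have hle M : h M <= Bd ^+ 2.
  rewrite /h -!expr2 -ReS -ImS.
  have c0 := cmod_ge0 (series F M).
  rewrite -(sqr_sqrtr (_ : 0 <= complex.Re (series F M) ^+ 2 + complex.Im (series F M) ^+ 2)); last by rewrite addr_ge0 ?sqr_ge0.
  rewrite lerXn2r ?nnegrE ?sqrtr_ge0 //.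
  apply: le_trans (hB M); apply: le_trans (cmod_sum_nat F M); done.
have : lim (h @ \oo) <= Bd ^+ 2.
  by apply: limr_le; [exact: cvgP hc | near=> M; exact: hle].
by rewrite (cvg_lim (@Rhausdorff R) hc) -!expr2.
Unshelve. all: by end_near.
Qed.
End Cvg.

End M6.
Import M6.

Local Open Scope ring_scope.

Lemma Tt_bound (R : realType) n p (Y : 'M[R[i]]_(n,p)) (S : 'M[R[i]]_p) (c d : 'cV[R[i]]_p) j :
  cmod (Tt Y S c d j) <= vnorm2 d * mnorm2 (ctr Y *m Y) * vnorm2 c *
     (mnorm2 S ^+ (2 * j) / (j`!%:R ^+ 2)).
Proof.
rewrite Tt_alt cmodM cmod_invfact -mulmxA.
set u := S ^+ j *m d; set v := S ^+ j *m c; set M := ctr Y *m Y.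
have h1 := CS_vec u (M *m v).
have h2 : vnorm2 u * vnorm2 (M *m v) <=
    (mnorm2 S ^+ j * vnorm2 d) * (mnorm2 M * (mnorm2 S ^+ j * vnorm2 c)).
  apply: ler_pM; rewrite ?vnorm2_ge0 //; first exact: mnorm2_pow.
  apply: le_trans (mnorm2_bound M v) _.
  by apply: ler_wpM2l; [exact: mnorm2_ge0 | exact: mnorm2_pow].
have k0 : 0 <= ((j`!%:R ^+ 2)^-1 : R) by rewrite invr_ge0 sqr_ge0.
apply: le_trans (ler_wpM2l k0 (le_trans h1 h2)) _.
by rewrite le_eqVlt; apply/orP; left; apply/eqP; rewrite mul2n -addnn exprD; ring.
Qed.

Lemma sum_shift0 (V : zmodType) (F : nat -> V) K M :
  (forall k, (k < K)%N -> F k = 0) ->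
  \sum_(0 <= k < M) F k = \sum_(K <= k < M) F k.
Proof.
move=> h; case: (leqP M K) => hMK.
  rewrite [RHS]big_geq // big_nat big1 // => k /andP[_ hk]; apply: h.
  exact: leq_trans hk hMK.
rewrite (big_cat_nat (n := K)) //= ?(ltnW hMK) //.
rewrite [X in X + _]big_nat big1 ?add0r // => k /andP[_ hk]; exact: h.
Qed.

Local Open Scope classical_set_scope.

Theorem mainTheorem3 (R : realType) (n p N : nat)
  (Y : 'M[R[i]]_(n, p)) (S : 'M[R[i]]_p) (c d : 'cV[R[i]]_p)
  (x z : 'I_N.+1 -> 'cV[R[i]]_n) (Nmax : nat) :
  (N.+1 <= Nmax)%N ->
  let eps := fun_inner (taylor_coef Y S c x) (taylor_coef Y S d z)
             - \sum_(k < N.+1) sc (ctr (z k) *m x k)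
             - sc (ctr d *m Wmat Y S N.+1 Nmax *m c) in
  cmod eps <= vnorm2 d * mnorm2 (ctr Y *m Y) * vnorm2 c
     * (expR (2 * mnorm2 S) * mnorm2 S ^+ (2 * Nmax.+1)
        / ((Nmax.+1)`!%:R) ^+ 2).
Proof.
move=> hN; cbv zeta.
set s := mnorm2 S.
set D := vnorm2 d * mnorm2 (ctr Y *m Y) * vnorm2 c.
have s0 : 0 <= s by exact: mnorm2_ge0.
have D0 : 0 <= D by rewrite !mulr_ge0 ?vnorm2_ge0 ?mnorm2_ge0.
pose t i := sc (ctr (taylor_coef Y S d z i) *m taylor_coef Y S c x i).
pose K := Nmax.+1.
pose F k := if (Nmax < k)%N then Tt Y S c d k else 0.
have Fb : forall M, \sum_(0 <= k < M) cmod (F k) <=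
    D * (expR (2 * s) * (s ^+ (2 * K) / (K`!%:R ^+ 2))).
  move=> M; rewrite (@sum_shift0 _ _ K); last first.
    by move=> k hk; rewrite /F ltnNge -ltnS hk /= cmod0.
  rewrite (eq_big_nat _ _ (F2 := fun k => cmod (Tt Y S c d k))); last first.
    by move=> k /andP[hk _]; rewrite /F hk.
  apply: le_trans (_ : \sum_(K <= k < M) D * (s ^+ (2 * k) / (k`!%:R ^+ 2)) <= _).
    by apply: ler_sum => k _; exact: Tt_bound.
  by rewrite -mulr_sumr ler_wpM2l // tail_bound.
have [L [HL HLb]] := cvg_complex_series Fb.
set A := \sum_(k < N.+1) sc (ctr (z k) *m x k).
set B := sc (ctr d *m Wmat Y S N.+1 Nmax *m c).
have tlo : \sum_(0 <= i < N.+1) t i = A.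
  rewrite big_mkord; apply: eq_bigr => k _.
  by rewrite /t /taylor_coef valK.
have thi : forall i, (N < i)%N -> t i = Tt Y S c d i.
  move=> i hi; rewrite /t /taylor_coef insubF ?Tt_coef //.
  by apply/negbTE; rewrite -leqNgt.
have dec : forall M, (K <= M)%N -> \sum_(0 <= i < M) t i = A + B + series F M.
  move=> M hM.
  rewrite (big_cat_nat (n := N.+1)) //= ?(leq_trans _ hM) ?(leq_trans hN) //.
  rewrite [X in _ + X](big_cat_nat (n := K)) //= ?(leq_trans hN) //.
  rewrite tlo -addrA; congr (_ + _); congr (_ + _).
    rewrite /B Wmat_sc.
    apply: eq_big_nat => i /andP[hi _].
    exact: thi.
  rewrite /series /= (@sum_shift0 _ _ K); last by move=> k hk; rewrite /F ltnNge -ltnS hk.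
  apply: eq_big_nat => i /andP[hi _]; rewrite /F hi /=; apply: thi.
  exact: leq_trans (leq_trans hN (leqnSn _)) hi.
have Hu : (fun M => \sum_(0 <= i < M) t i) @ \oo --> (A + B + L).
  have H1 : ((fun M => A + B + series F M) : nat -> (R[i])^o) @ \oo --> ((A + B + L) : (R[i])^o).
    by apply: cvgD; [exact: cvg_cst | exact: HL].
  apply: cvg_trans H1; apply: near_eq_cvg.
  near=> M; apply/esym/dec; near: M.
  by exists K => // M /=.
have -> : fun_inner (taylor_coef Y S c x) (taylor_coef Y S d z) = A + B + L.
  exact: (@cvg_lim _ (@norm_hausdorff _ (R[i]^o)) _ _ _ _ _ Hu).
have -> : A + B + L - A - B = L by ring.
by apply: le_trans HLb _; rewrite -mulrA.
Unshelve. all: by end_near.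
Qed.
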